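(* Assume $m\le n$. Then $\mathcal{T}_I(\mathbf{x})\ne\emptyset$ for every Generalized Nash equilibrium $\mathbf{x}$ of $G^{(2)}$.
   Context: $G^{(2)}$ is a Fragile multi-CPR Game with $n\ge1$ players and $m\ge1$ CPRs: $[k]=\{1,\dots,k\}$, $C_m=\{(x_1,\dots,x_m)\in[0,1]^m:\sum_j x_j\le1\}$, $\mathcal{C}_n=\prod_{i\in[n]}C_m$, $\mathcal{C}_{-i}=\prod_{[n]\setminus\{i\}}C_m$. A profile is $\mathbf{x}=(\mathbf{x}_1,\dots,\mathbf{x}_n)$, $\mathbf{x}_i=(x_{i1},\dots,x_{im})$; write $\mathbf{x}=(\mathbf{x}_i,\mathbf{x}_{-i})$; $\mathbf{x}_T^{(j)}=\sum_i x_{ij}$, $\mathbf{x}_T^{j|i}=\sum_{\ell\ne i}x_{\ell j}$. Each CPR $j$ has return rate $\mathcal{R}_j(t)>1$ and failure probability $p_j(t)\in[0,1]$; each player $i$ has parameters $a_i,k_i$. $\mathcal{F}_{ij}(t)=(\mathcal{R}_j(t)-1)^{a_i}(1-p_j(t))-k_ip_j(t)$; utility $\mathcal{V}_i(\mathbf{x}_i;\mathbf{x}_{-i})=\sum_j x_{ij}^{a_i}\mathcal{F}_{ij}(\mathbf{x}_T^{(j)})$. Assumption: (1) $p_j(0)=0$, $p_j(t)=1$ for $t\ge1$; (2) $a_i\in(0,1]$, $k_i>0$; (3) each $\mathcal{F}_{ij}$ (continuous on $[0,1]$) has strictly negative first and second derivatives on $(0,1)$. $\omega_{ij}\in(0,1)$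 is the unique zero of $\mathcal{F}_{ij}$ in $(0,1)$. $A(\mathbf{x}_{-i})=\{j:\mathbf{x}_T^{j|i}<\omega_{ij}\}$. $\vartheta_i(\mathbf{x}_{-i})=C_m\cap\big(\prod_{j\in A(\mathbf{x}_{-i})}[0,\omega_{ij}-\mathbf{x}_T^{j|i}]\times\prod_{j\notin A(\mathbf{x}_{-i})}\{0\}\big)$. A Generalized Nash equilibrium is $\mathbf{x}\in\mathcal{C}_n$ with, for all $i$, $\mathbf{x}_i\in\vartheta_i(\mathbf{x}_{-i})$ and $\mathcal{V}_i(\mathbf{x}_i;\mathbf{x}_{-i})\ge\mathcal{V}_i(\mathbf{z};\mathbf{x}_{-i})$ for all $\mathbf{z}\in\vartheta_i(\mathbf{x}_{-i})$. $\psi_{ij}(x;s)=x\,\mathcal{F}_{ij}'(x+s)+a_i\mathcal{F}_{ij}(x+s)$. For a GNE $\mathbf{x}$: $J_{\mathbf{x}_{-i}}=\{j\in A(\mathbf{x}_{-i}):x_{ij}\ne0\}$; $\mathbf{x}_i$ is of Type I if $\sum_{j\in J_{\mathbf{x}_{-i}}}x_{ij}<1$ and $\psi_{ij}(x_{ij};\mathbf{x}_T^{j|i})=0$ for all $j\in J_{\mathbf{x}_{-i}}$; of Type II if $\sum_{j\in J_{\mathbf{x}_{-i}}}x_{ij}=1$ and there is $\kappa_0\ge0$ with $x_{ij}^{a_i-1}\psi_{ij}(x_{ij};\mathbf{x}_T^{j|i})=\kappa_0$ for all $j\in J_{\mathbf{x}_{-i}}$. $\mathcal{T}_I(\mathbf{x})=\{i\in[n]:\mathbf{x}_i\text{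 is of Type I}\}$. *)

(* Defs.v *)
From HB Require Import structures.
From mathcomp Require Import all_boot all_order all_algebra.
From mathcomp Require Import all_classical all_reals all_analysis.
Set Implicit Arguments. Unset Strict Implicit. Unset Printing Implicit Defensive.
Import Order.TTheory GRing.Theory Num.Theory numFieldNormedType.Exports.
Local Open Scope ring_scope.

(* Players are 'I_n, CPRs are 'I_m; a profile is x : 'I_n -> 'I_m -> R,
   x i j = x_{ij}. *)

Definition xTo (R : realType) (n m : nat) (x : 'I_n -> 'I_m -> R) (i : 'I_n) (j : 'I_m) : R :=
  \sum_(l < n | l != i) x l j.

Definition Fpay (R : realType) (n m : nat) (Rr p : 'I_m -> R -> R) (a k : 'I_n -> R)
  (i : 'I_n) (j : 'I_m) (t : R) : R :=
  (Rr j t - 1) `^ (a i) * (1 - p j t) - k i * p j t.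

Definition inCm (R : realType) (m : nat) (z : 'I_m -> R) : Prop :=
  (forall j, 0 <= z j <= 1) /\ \sum_(j < m) z j <= 1.

Definition inA (R : realType) (n m : nat) (omega : 'I_n -> 'I_m -> R)
  (x : 'I_n -> 'I_m -> R) (i : 'I_n) (j : 'I_m) : bool :=
  xTo x i j < omega i j.

Definition vartheta (R : realType) (n m : nat) (omega : 'I_n -> 'I_m -> R)
  (x : 'I_n -> 'I_m -> R) (i : 'I_n) (z : 'I_m -> R) : Prop :=
  inCm z /\
  forall j, if inA omega x i j then 0 <= z j <= omega i j - xTo x i j else z j == 0.

Definition Vutil (R : realType) (n m : nat) (F : 'I_n -> 'I_m -> R -> R) (a : 'I_n -> R)
  (x : 'I_n -> 'I_m -> R) (i : 'I_n) (z : 'I_m -> R) : R :=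
  \sum_(j < m) (z j `^ a i) * F i j (z j + xTo x i j).

Definition isGNE (R : realType) (n m : nat) (F : 'I_n -> 'I_m -> R -> R) (a : 'I_n -> R)
  (omega : 'I_n -> 'I_m -> R) (x : 'I_n -> 'I_m -> R) : Prop :=
  (forall i, inCm (x i)) /\
  forall i, vartheta omega x i (x i) /\
    forall z, vartheta omega x i z -> Vutil F a x i z <= Vutil F a x i (x i).

Definition psi (R : realType) (n m : nat) (F : 'I_n -> 'I_m -> R -> R) (a : 'I_n -> R)
  (i : 'I_n) (j : 'I_m) (y s : R) : R :=
  y * derive1 (F i j) (y + s) + a i * F i j (y + s).

Definition inJ (R : realType) (n m : nat) (omega : 'I_n -> 'I_m -> R)
  (x : 'I_n -> 'I_m -> R) (i : 'I_n) (j : 'I_m) : bool :=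
  inA omega x i j && (x i j != 0).

Definition typeI (R : realType) (n m : nat) (F : 'I_n -> 'I_m -> R -> R) (a : 'I_n -> R)
  (omega : 'I_n -> 'I_m -> R) (x : 'I_n -> 'I_m -> R) (i : 'I_n) : Prop :=
  \sum_(j < m | inJ omega x i j) x i j < 1 /\
  forall j, inJ omega x i j -> psi F a i j (x i j) (xTo x i j) = 0.

Definition typeII (R : realType) (n m : nat) (F : 'I_n -> 'I_m -> R -> R) (a : 'I_n -> R)
  (omega : 'I_n -> 'I_m -> R) (x : 'I_n -> 'I_m -> R) (i : 'I_n) : Prop :=
  \sum_(j < m | inJ omega x i j) x i j = 1 /\
  exists kappa0 : R, 0 <= kappa0 /\
    forall j, inJ omega x i j ->
      (x i j) `^ (a i - 1) * psi F a i j (x i j) (xTo x i j) = kappa0.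

(* Main.v *)
Require Import Defs.
From HB Require Import structures.
From mathcomp Require Import all_boot all_order all_algebra.
From mathcomp Require Import all_classical all_reals all_analysis.
Import Order.TTheory GRing.Theory Num.Theory numFieldNormedType.Exports.
Local Open Scope ring_scope.
Local Open Scope classical_set_scope.
From mathcomp Require Import ring lra.
Lemma right_max (R : realType) (f : R -> R) (c d e : R) : is_derive c 1 f d -> 0 < e ->
  (forall h, 0 < h < e -> f (c + h) <= f c) -> d <= 0.
Proof.
move=> [fdrvbl <-] e0 cmax.
rewrite ['D_1 f c]cvg_at_rightE; last exact: fdrvbl.
apply: limr_le.
  rewrite -(cvg_at_rightE (fun h : R => h^-1 *: ((f \o shift c) _ - f c))) //.
  apply: cvg_trans fdrvbl; apply: cvg_app.
  move=> A [e' egt0 Ae]; exists e' => // x xe xgt0; apply: Ae => //.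
  exact/lt0r_neq0.
near=> h; apply: mulr_ge0_le0.
  by rewrite invr_ge0; apply: ltW; near: h; exists 1 => /=.
rewrite subr_le0 [_%:A]mulr1 /= addrC; apply: cmax; apply/andP; split.
  by near: h; exists 1 => /=.
near: h; exists e => //= h; idtac.
move=> + h0; rewrite /ball_ /= sub0r normrN gtr0_norm //.
Unshelve. all: end_near. Qed.

Lemma left_max (R : realType) (f : R -> R) (c d e : R) : is_derive c 1 f d -> 0 < e ->
  (forall h, 0 < h < e -> f (c - h) <= f c) -> 0 <= d.
Proof.
move=> [fdrvbl <-] e0 cmax.
rewrite ['D_1 f c]cvg_at_leftE; last exact: fdrvbl.
apply: limr_ge.
  rewrite -(cvg_at_leftE (fun h : R => h^-1 *: ((f \o shift c) _ - f c))) //.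
  apply: cvg_trans fdrvbl; apply: cvg_app.
  move=> A [e' egt0 Ae]; exists e' => // x xe xgt0; apply: Ae => //.
  exact/ltr0_neq0.
near=> h; apply: mulr_le0.
  by rewrite invr_le0; apply: ltW; near: h; exists 1 => /=.
rewrite subr_le0 [_%:A]mulr1 /= addrC -[h]opprK; apply: cmax; apply/andP; split.
  by rewrite oppr_gt0; near: h; exists 1 => /=.
near: h; exists e => //= h + h0; rewrite /ball_ /= sub0r normrN ltr0_norm // ltrNl opprK.

Unshelve. all: end_near. Qed.
Lemma derG (R: realType) (F : R -> R) (a s y : R) : 0 < y -> derivable F (y+s) 1 ->
  is_derive y 1 (fun u => u `^ a * F (u + s))
     (y `^ (a-1) * (y * derive1 F (y+s) + a * F (y+s))).
Proof.
move=> y0 dF.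
have h1 := is_derive1_powR a y0.
have h2 : is_derive y 1 (F \o shift s) (derive1 F (y+s) * 1).
  apply: is_derive1_comp; last exact: is_derive_shift.
  by rewrite derive1E; apply: derivableP.
have h3 := is_deriveM h1 h2.
rewrite (_ : (fun u => _) = ((@powR R)^~ a * (F \o shift s))); last by apply/funext.
apply: (is_derive_eq h3).


rewrite /= /GRing.scale /= mulr1.
have yp : y `^ a = y `^ (a - 1) * y.
  by rewrite -{3}(powRr1 (ltW y0)) -powRD ?subrK // ; apply/implyP => _; rewrite gt_eqF.
rewrite yp /=; ring.
Qed.
Lemma sum_upd (R : realType) (m : nat) (H : 'I_m -> R -> R) (f : 'I_m -> R) j v :
  \sum_(j' < m) H j' (if j' == j then v else f j') =
  \sum_(j' < m) H j' (f j') + (H j v - H j (f j)).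
Proof.
rewrite (bigD1 j) //= eqxx [in RHS](bigD1 j) //=.
rewrite (eq_bigr (fun j' => H j' (f j'))) => [|j' /negbTE -> //].
ring.
Qed.
Theorem lemma7 (R : realType) (n m : nat)
  (Rr p : 'I_m -> R -> R) (a k : 'I_n -> R) (omega : 'I_n -> 'I_m -> R)
  (hn : (0 < n)%N) (hm : (0 < m)%N) (hmn : (m <= n)%N)
  (hR : forall j (t : R), 0 <= t -> 1 < Rr j t)
  (hp : forall j (t : R), 0 <= t -> 0 <= p j t <= 1)
  (hp0 : forall j, p j 0 = 0)
  (hp1 : forall j (t : R), 1 <= t -> p j t = 1)
  (ha : forall i, 0 < a i <= 1)
  (hk : forall i, 0 < k i)
  (hcont : forall i j, {within `[0 : R, 1], continuous (Fpay Rr p a k i j)})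
  (hd1 : forall i j (t : R), 0 < t < 1 ->
     derivable (Fpay Rr p a k i j) t 1 /\ derive1 (Fpay Rr p a k i j) t < 0)
  (hd2 : forall i j (t : R), 0 < t < 1 ->
     derivable (derive1 (Fpay Rr p a k i j)) t 1 /\ derive1 (derive1 (Fpay Rr p a k i j)) t < 0)
  (homega : forall i j, 0 < omega i j < 1 /\ Fpay Rr p a k i j (omega i j) = 0 /\
     (forall t, 0 < t < 1 -> Fpay Rr p a k i j t = 0 -> t = omega i j))
  (x : 'I_n -> 'I_m -> R) :
  isGNE (Fpay Rr p a k) a omega x ->
  exists i : 'I_n, typeI (Fpay Rr p a k) a omega x i.

Proof.
move=> [hC hopt].

have x0 : forall i j, 0 <= x i j by move=> i j; case/andP: ((hC i).1 j).
have xb : forall i j, x i j != 0 -> inA omega x i j /\ x i j <= omega i j - xTo x i j.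
  move=> i j nz; have := (hopt i).1.2 j; case: (inA omega x i j).
    by case/andP.
  by rewrite (negbTE nz).
have xTo0 : forall i j, 0 <= xTo x i j.
  by move=> i j; rewrite /xTo; apply: sumr_ge0 => l _; exact: x0.
have col : forall j, \sum_(i < n) x i j < 1.
  move=> j; case: (pselect (exists i0, x i0 j != 0)) => [[i0 nz]|H].
    rewrite (bigD1 i0) //=; have [hA hb] := xb i0 j nz.
    have := (homega i0 j).1; rewrite /xTo in hb; case/andP => _ ?; lra.
  rewrite big1 // => i _; apply/eqP/negPn/negP => nz; apply: H; by exists i.
have [i hi] : exists i, \sum_(j < m) x i j < 1.
  apply: contrapT => H.
  have all1 : forall i, 1 <= \sum_(j < m) x i j.
    move=> i; rewrite leNgt; apply/negP => h; apply: H; by exists i.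
  have h1 : \sum_(i < n) (1:R) <= \sum_(i < n) \sum_(j < m) x i j by apply: ler_sum.
  rewrite exchange_big /= in h1.
  have h2 : \sum_(j < m) \sum_(i < n) x i j < \sum_(j < m) (1:R).
    apply: ltr_sum => // ; apply/hasP; exists (Ordinal hm) => //; exact: mem_index_enum.
  rewrite !sumr_const !card_ord in h1 h2.
  have : (m%:R : R) <= n%:R by rewrite ler_nat.
  lra.
exists i; split.
  apply: le_lt_trans hi; rewrite [leRHS](bigID (fun j => inJ omega x i j)) /=.
  rewrite lerDl; apply: sumr_ge0 => j _; exact: x0.
move=> j /andP [hA nz].
have [_ hb] := xb i j nz.
set y := x i j in nz hb *; set s := xTo x i j in hb *.
have y0 : 0 < y by rewrite lt0r nz x0.
have s0 : 0 <= s := xTo0 i j.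
have [om0 [omF omU]] := homega i j.
have t01 : 0 < y + s < 1 by apply/andP; split; case/andP: om0 => *; lra.
have [dF dFneg] := hd1 i j _ t01.
have hG := @derG R _ (a i) _ _ y0 dF.
set G := fun u => u `^ a i * Fpay Rr p a k i j (u + s).
have pert : forall h, 0 <= y + h <= omega i j - s -> \sum_(j' < m) x i j' + h <= 1 ->
    G (y + h) <= G y.
  move=> h /andP [hh1 hh2] hsum.
  pose z := fun j' => if j' == j then y + h else x i j'.
  have vz : vartheta omega x i z.
    split; [split|].
    - move=> j'; rewrite /z; case: eqP => _; last exact: (hC i).1.
      by apply/andP; split => //; case/andP: om0 => *; lra.
    - rewrite (@sum_upd R m (fun _ w => w)) /= -/y; lra.
    - move=> j'; rewrite /z; case: eqP => [->|_]; last exact: ((hopt i).1.2 j').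
      by rewrite hA; apply/andP.
  have := (hopt i).2 z vz.
  rewrite /Vutil (@sum_upd R m (fun j' w => w `^ a i * Fpay Rr p a k i j' (w + xTo x i j'))) /=.
  rewrite /G -/y -/s; lra.
have pn : 0 < y `^ (a i - 1) by apply: powR_gt0.
have psige : 0 <= psi (Fpay Rr p a k) a i j y s.
  have : 0 <= y `^ (a i - 1) * psi (Fpay Rr p a k) a i j y s.
    apply: (@left_max R G y _ y hG y0) => h /andP [h0 hy].
    rewrite -[y - h]/(y + - h); apply: pert.
      by apply/andP; split; lra.
    lra.
  by rewrite pmulr_rge0.
case: (ltP y (omega i j - s)) => hy.
  have : y `^ (a i - 1) * psi (Fpay Rr p a k) a i j y s <= 0.
    apply: (@right_max R G y _ (Num.min (omega i j - s - y) (1 - \sum_(j' < m) x i j')) hG).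
      by rewrite lt_min; apply/andP; split; lra.
    move=> h /andP [h0]; rewrite lt_min => /andP [hh1 hh2].
    apply: pert; last lra.
    by apply/andP; split; lra.
  rewrite pmulr_rle0 // => hle; lra.
have e : y + s = omega i j by lra.
exfalso.
move: psige dFneg; rewrite /psi e omF mulr0 addr0 => psige dFneg.
have : y * derive1 (Fpay Rr p a k i j) (omega i j) < 0 by rewrite pmulr_rlt0.
lra.
Qed.
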